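(* Let $\mathcal M$ be an o-minimal structure in a language $\mathcal L$ with universe $M$, and $\mathcal N$ an expansion of $\mathcal M$ such that every open definable set is $\mathcal L$-definable and $\mathcal N$ admits a dimension function $\dim$ compatible with $\mathcal M$. Let $X\subseteq M^n$ be strongly large of dimension $k$. Then every definable map $f:X\to M$ agrees with an $\mathcal L$-definable map $F:M^n\to M$ outside a definable set $S$ of dimension $<k$.
   Context: ''Definable'' means definable in $\mathcal N$ with parameters; ''$\mathcal L$-definable'' means definable in $\mathcal M$ with parameters. A dimension function compatible with $\mathcal M$ is a map $\dim$ from definable sets to $\{-\infty\}\cup\mathbb N$ such that for all definable $X,Y\subseteq M^n$, $a\in M$: (D1) $\dim\{a\}=0$, $\dim M=1$, $\dim X=-\infty$ iff $X=\emptyset$; (D2) $\dim(X\cup Y)=\max\{\dim X,\dim Y\}$; (D3) for a definable family $\{X_t\}_{t\in I}$ of pairwise disjoint sets: (a) each $\{t\in I:\dim X_t=d\}$ is definable; (b) if all $X_t$ have dimension $k$ then $\dim\bigcup_t X_t=\dim I+k$; (D4) definable bijections preserve $\dim$; (D5) on $\mathcal L$-definable sets $\dim$ is the o-minimal dimension; (D6) every definable $f:M^n\to M$ agrees with an $\mathcal L$-definable $F:M^n\to M$ outside a definable set of dimension $<n$. $cl$ denotes topological closure; a definable set $X$ is strongly large if $\dim X=\dim cl(X)$. *)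

(* Defs.v *)
From mathcomp Require Import all_boot.

Set Implicit Arguments.
Unset Strict Implicit.
Unset Printing Implicit Defensive.

Definition tup (M : Type) (n : nat) := 'I_n -> M.
Definition pset (M : Type) (n : nat) := tup M n -> Prop.

Definition concat (M : Type) (m n : nat) (x : tup M m) (y : tup M n) : tup M (m + n) :=
  fun i => match split i with inl j => x j | inr j => y j end.

Definition fstp (M : Type) (m n : nat) (z : tup M (m + n)) : tup M m :=
  fun i => z (lshift n i).
Definition sndp (M : Type) (m n : nat) (z : tup M (m + n)) : tup M n :=
  fun j => z (rshift m j).

Definition snoc (M : Type) (n : nat) (x : tup M n) (y : M) : tup M n.+1 :=
  fun i => match unlift ord_max i with Some j => x j | None => y end.

Definition graph (M : Type) (n m : nat) (X : pset M n) (f : tup M n -> tup M m)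
  : pset M (n + m) :=
  fun z => X (fstp z) /\ forall j, sndp z j = f (fstp z) j.

Definition fiber (M : Type) (m n : nat) (Z : pset M (m + n)) (t : tup M m) : pset M n :=
  fun x => Z (concat t x).

Definition cproj (M : Type) (d n : nat) (sigma : 'I_d -> 'I_n) (X : pset M n) : pset M d :=
  fun y => exists x, X x /\ forall i, y i = x (sigma i).

Record is_structure (M : Type) (D : forall n, pset M n -> Prop) : Prop := {
  st_empty : forall n, D n (fun _ => False);
  st_compl : forall n (A : pset M n), D n A -> D n (fun x => ~ A x);
  st_union : forall n (A B : pset M n), D n A -> D n B -> D n (fun x => A x \/ B x);
  st_prodl : forall n (A : pset M n), D n A -> D n.+1 (fun x => A (fun i => x (lift ord0 i)));
  st_prodr : forall n (A : pset M n), D n A -> D n.+1 (fun x => A (fun i => x (lift ord_max i)));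
  st_diag : forall n (i j : 'I_n), D n (fun x => x i = x j);
  st_proj : forall n (A : pset M n.+1), D n.+1 A -> D n (fun x => exists y, A (snoc x y));
  (* parameters: singletons are definable *)
  st_point : forall a : M, D 1 (fun x => x ord0 = a)
}.

Record dlo (M : Type) (lt : M -> M -> Prop) : Prop := {
  dlo_inhab : inhabited M;
  dlo_irrefl : forall x, ~ lt x x;
  dlo_trans : forall x y z, lt x y -> lt y z -> lt x z;
  dlo_total : forall x y, lt x y \/ x = y \/ lt y x;
  dlo_dense : forall x y, lt x y -> exists z, lt x z /\ lt z y;
  dlo_nomax : forall x, exists y, lt x y;
  dlo_nomin : forall x, exists y, lt y x
}.

(* open interval with endpoints in M u {-oo, +oo} (None = infinite) *)
Definition in_interval (M : Type) (lt : M -> M -> Prop)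
  (I : option M * option M) (x : M) : Prop :=
  (match I.1 with Some a => lt a x | None => True end) /\
  (match I.2 with Some b => lt x b | None => True end).

Record o_minimal (M : Type) (lt : M -> M -> Prop) (D : forall n, pset M n -> Prop) : Prop := {
  om_struct : is_structure D;
  om_dlo : dlo lt;
  om_lt : D 2 (fun x => lt (x ord0) (x ord_max));
  om_omin : forall A : pset M 1, D 1 A ->
    exists (p q : nat) (pts : 'I_p -> M) (ivs : 'I_q -> option M * option M),
      forall x : tup M 1,
        A x <-> ((exists i, x ord0 = pts i) \/ (exists j, in_interval lt (ivs j) (x ord0)))
}.

Definition expands (M : Type) (DM DN : forall n, pset M n -> Prop) : Prop :=
  forall n (A : pset M n), DM n A -> DN n A.

Definition box (M : Type) (lt : M -> M -> Prop) (n : nat) (a b : tup M n) : pset M n :=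
  fun x => forall i, lt (a i) (x i) /\ lt (x i) (b i).

Definition is_open (M : Type) (lt : M -> M -> Prop) (n : nat) (U : pset M n) : Prop :=
  forall x, U x -> exists a b : tup M n, box lt a b x /\ forall y, box lt a b y -> U y.

Definition closure (M : Type) (lt : M -> M -> Prop) (n : nat) (X : pset M n) : pset M n :=
  fun x => forall a b : tup M n, box lt a b x -> exists y, box lt a b y /\ X y.

Definition has_interior (M : Type) (lt : M -> M -> Prop) (n : nat) (X : pset M n) : Prop :=
  exists x, X x /\ exists a b : tup M n, box lt a b x /\ forall y, box lt a b y -> X y.

Definition open_definable_L (M : Type) (lt : M -> M -> Prop)
  (DM DN : forall n, pset M n -> Prop) : Prop :=
  forall n (U : pset M n), DN n U -> is_open lt U -> DM n U.

(* Dimensions: values in {-oo} u N, encoded as option nat (None = -oo) *)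

Definition omax (a b : option nat) : option nat :=
  match a, b with
  | None, _ => b
  | _, None => a
  | Some x, Some y => Some (maxn x y)
  end.

Definition oadd (a b : option nat) : option nat :=
  match a, b with
  | Some x, Some y => Some (x + y)
  | _, _ => None
  end.

Definition olt (a : option nat) (k : nat) : Prop :=
  match a with None => True | Some x => x < k end.

Definition odim (M : Type) (lt : M -> M -> Prop) (n : nat) (X : pset M n)
  (o : option nat) : Prop :=
  match o with
  | None => forall x, ~ X x
  | Some d =>
      (exists sigma : 'I_d -> 'I_n, injective sigma /\ has_interior lt (cproj sigma X)) /\
      (forall d' (sigma : 'I_d' -> 'I_n), injective sigma ->
          has_interior lt (cproj sigma X) -> d' <= d)
  end.

Record dim_compatible (M : Type) (lt : M -> M -> Prop)
  (DM DN : forall n, pset M n -> Prop) (dim : forall n, pset M n -> option nat) : Prop := {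
  D1_point : forall a : M, dim 1 (fun x => x ord0 = a) = Some 0;
  D1_line : dim 1 (fun _ => True) = Some 1;
  D1_empty : forall n (X : pset M n), DN n X -> (dim n X = None <-> forall x, ~ X x);
  D2 : forall n (X Y : pset M n), DN n X -> DN n Y ->
         dim n (fun x => X x \/ Y x) = omax (dim n X) (dim n Y);
  (* (D3) definable families {X_t}_{t in I}, X_t = fibre of Z over t *)
  D3a : forall m n (I : pset M m) (Z : pset M (m + n)), DN m I -> DN (m + n) Z ->
         (forall t t', I t -> I t' -> t <> t' -> forall x, ~ (fiber Z t x /\ fiber Z t' x)) ->
         forall d : option nat, DN m (fun t => I t /\ dim n (fiber Z t) = d);
  D3b : forall m n (I : pset M m) (Z : pset M (m + n)), DN m I -> DN (m + n) Z ->
         (forall t t', I t -> I t' -> t <> t' -> forall x, ~ (fiber Z t x /\ fiber Z t' x)) ->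
         forall k : option nat, (forall t, I t -> dim n (fiber Z t) = k) ->
         dim n (fun x => exists t, I t /\ fiber Z t x) = oadd (dim m I) k;
  D4 : forall n m (X : pset M n) (Y : pset M m) (f : tup M n -> tup M m),
         DN n X -> DN m Y -> DN (n + m) (graph X f) ->
         (forall x, X x -> Y (f x)) ->
         (forall x x', X x -> X x' -> f x = f x' -> x = x') ->
         (forall y, Y y -> exists x, X x /\ f x = y) ->
         dim n X = dim m Y;
  D5 : forall n (X : pset M n), DM n X -> odim lt X (dim n X);
  D6 : forall n (f : tup M n -> M),
         DN (n + 1) (graph (fun _ => True) (fun x (_ : 'I_1) => f x)) ->
         exists F : tup M n -> M,
           DM (n + 1) (graph (fun _ => True) (fun x (_ : 'I_1) => F x)) /\
           exists S : pset M n, DN n S /\ olt (dim n S) n /\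
             forall x, ~ S x -> f x = F x
}.

Definition strongly_large (M : Type) (lt : M -> M -> Prop)
  (DN : forall n, pset M n -> Prop) (dim : forall n, pset M n -> option nat)
  (n : nat) (X : pset M n) : Prop :=
  DN n X /\ dim n X = dim n (closure lt X).

(* Main.v *)
Require Import Defs.
From mathcomp Require Import all_boot.
From mathcomp Require Import zify.
From Stdlib Require Import FunctionalExtensionality PropExtensionality ClassicalEpsilon Classical.

Set Implicit Arguments.
Unset Strict Implicit.
Unset Printing Implicit Defensive.



Lemma pset_ext (M : Type) n (A B : pset M n) : (forall x, A x <-> B x) -> A = B.
Proof. move=> h; apply: functional_extensionality => x; apply: propositional_extensionality; exact: h. Qed.

Lemma tup_ext (M : Type) n (x y : tup M n) : (forall i, x i = y i) -> x = y.
Proof. move=> h; apply: functional_extensionality => i; exact: h. Qed.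

Section DefFW.
Variable M : Type.
Variable D : forall n, pset M n -> Prop.
Arguments D : clear implicits.
Hypothesis HD : is_structure D.
Variable a0 : M.

Definition rv k (x : tup M k) : nat -> M :=
  fun i => if i < k then oapp x a0 (insub (k - i.+1)) else a0.
Definition tv k (v : nat -> M) : tup M k := fun j => v (k - j.+1).
Arguments tv : clear implicits.
Definition shift (v : nat -> M) : nat -> M := fun i => v i.+1.
Definition shiftn a (v : nat -> M) : nat -> M := fun i => v (a + i).
Definition scons (y : M) (v : nat -> M) : nat -> M :=
  fun i => match i with 0 => y | i'.+1 => v i' end.

Lemma rv_ord k (x : tup M k) (j : 'I_k) : rv x (k - j.+1) = x j.
Proof.
rewrite /rv. have hj := ltn_ord j.
have -> : (k - j.+1 < k) = true by apply/idP; lia.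
have -> : k - (k - j.+1).+1 = j by lia.
by rewrite valK.
Qed.

Lemma rv_ge k (x : tup M k) i : k <= i -> rv x i = a0.
Proof. by move=> h; rewrite /rv ltnNge h. Qed.

Lemma tv_rv k (x : tup M k) : tv k (rv x) = x.
Proof. apply: tup_ext => j; exact: rv_ord. Qed.

Lemma sub_lt k i : i < k -> k - i.+1 < k.
Proof. lia. Qed.

Lemma rv_val k (x : tup M k) i (hi : i < k) : rv x i = x (Ordinal (sub_lt hi)).
Proof.
have := rv_ord x (Ordinal (sub_lt hi)) => /=.
by have -> : k - (k - i.+1).+1 = i by lia.
Qed.

Lemma rv_snoc k (x : tup M k) y : rv (snoc x y) = scons y (rv x).
Proof.
apply: functional_extensionality => i.
case: i => [|i] /=.
  rewrite (rv_val _ (i:=0)) //= /snoc.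
  case: unliftP => [j' /(congr1 val) E|//]. exfalso. move: E. rewrite /= /bump. have hj := ltn_ord j'. simpl in hj. case: leqP => ? /=; lia.
case: (ltnP i k) => hi.
  have h1 : i.+1 < k.+1 by lia.
  rewrite (rv_val _ h1) (rv_val _ hi).
  rewrite /snoc. case: unliftP => [j' /(congr1 val) E|/(congr1 val) /= E].
    f_equal; apply: val_inj => /=. move: E. rewrite /= /bump. have hj := ltn_ord j'. simpl in hj. case: leqP => ? /=; lia.
  exfalso; lia.
by rewrite !rv_ge //.
Qed.

Definition Def k (P : (nat -> M) -> Prop) := D k (fun x => P (rv x)).

Lemma D_ext n (A B : pset M n) : (forall x, A x <-> B x) -> D n A -> D n B.
Proof. by move=> h; rewrite (pset_ext h). Qed.

Lemma Def_ext k (P Q : (nat -> M) -> Prop) : (forall v, P v <-> Q v) -> Def k P -> Def k Q.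
Proof. move=> h; apply: D_ext => x; exact: h. Qed.

Lemma Def_D k (P : (nat -> M) -> Prop) (S : pset M k) :
  Def k P -> (forall x, S x <-> P (rv x)) -> D k S.
Proof. move=> hP h; apply: D_ext hP => x; by rewrite h. Qed.

Lemma D_Def k (S : pset M k) : D k S -> Def k (fun v => S (tv k v)).
Proof. move=> h; apply: D_ext h => x; by rewrite tv_rv. Qed.

Lemma Def_DE k (S : pset M k) : Def k (fun v => S (tv k v)) -> D k S.
Proof. move=> h; apply: Def_D h _ => x; by rewrite tv_rv. Qed.

Lemma Def_ex k (Q : M -> (nat -> M) -> Prop) :
  Def k.+1 (fun w => Q (w 0) (shift w)) -> Def k (fun v => exists y, Q y v).
Proof.
rewrite /Def => h; have := st_proj HD h; apply: D_ext => x /=.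
by split=> -[y hy]; exists y; move: hy; rewrite rv_snoc.
Qed.

Lemma Def_not k P : Def k P -> Def k (fun v => ~ P v).
Proof. rewrite /Def => h; exact: (st_compl HD h). Qed.

Lemma Def_or k P Q : Def k P -> Def k Q -> Def k (fun v => P v \/ Q v).
Proof. rewrite /Def => h1 h2; exact: (st_union HD h1 h2). Qed.

Lemma Def_False k : Def k (fun _ => False).
Proof. exact: (st_empty HD k). Qed.

Lemma Def_True k : Def k (fun _ => True).
Proof. apply: Def_ext (Def_not (Def_False k)) => v; tauto. Qed.

Lemma Def_and k P Q : Def k P -> Def k Q -> Def k (fun v => P v /\ Q v).
Proof.
move=> hP hQ; apply: Def_ext (Def_not (Def_or (Def_not hP) (Def_not hQ))) => v.
split; [move=> h; split; apply: NNPP; tauto | tauto].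
Qed.

Lemma Def_imp k P Q : Def k P -> Def k Q -> Def k (fun v => P v -> Q v).
Proof.
move=> hP hQ; apply: Def_ext (Def_or (Def_not hP) hQ) => v.
split; [tauto| move=> h; case: (classic (P v)); tauto].
Qed.

Lemma Def_iff k P Q : Def k P -> Def k Q -> Def k (fun v => P v <-> Q v).
Proof. move=> hP hQ; apply: Def_and; exact: Def_imp. Qed.

Lemma Def_all k (Q : M -> (nat -> M) -> Prop) :
  Def k.+1 (fun w => Q (w 0) (shift w)) -> Def k (fun v => forall y, Q y v).
Proof.
move=> h; apply: Def_ext (Def_not (@Def_ex k (fun y v => ~ Q y v) (Def_not h))) => v.
split; [move=> H y; apply: NNPP => hn; apply: H; by exists y | ].
move=> H [y] hy; exact: hy (H y).
Qed.

Definition trunc k (v : nat -> M) : nat -> M := fun i => if i < k then v i else a0.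
Definition bounded k (P : (nat -> M) -> Prop) :=
  forall v w, (forall i, i < k -> v i = w i) -> (P v <-> P w).

Lemma Def_weak1 k P : Def k P -> bounded k P -> Def k.+1 P.
Proof.
rewrite /Def => h hb; have := st_prodl HD h; apply: D_ext => x /=.
apply: hb => i hi.
have hi' : i < k.+1 by lia.
rewrite (rv_val _ hi) (rv_val _ hi').
f_equal; apply: val_inj => /=. rewrite /bump /=. lia.
Qed.

Lemma Def_weak k k' P : Def k P -> bounded k P -> k <= k' -> Def k' P.
Proof.
move=> h hb; elim: k' => [|k' IH] hk.
  have E : k = 0 by lia. by rewrite E in h.
case: (ltnP k k'.+1) => hk'.
  apply: Def_weak1; first by apply: IH; lia.
  move=> v w hvw; apply: hb => i hi; apply: hvw; lia.
have E : k = k'.+1 by lia. by rewrite -E.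
Qed.

Lemma Def_diag k i j : i < k -> j < k -> Def k (fun v => v i = v j).
Proof.
move=> hi hj.
have := st_diag HD (Ordinal (sub_lt hi)) (Ordinal (sub_lt hj)).
apply: D_ext => x.
rewrite (rv_val _ hi) (rv_val _ hj).
split=> E; (have ? := E); by [ rewrite -E; f_equal; apply: val_inj | rewrite E ]. 
Qed.

Lemma Def_pt0 c : Def 1 (fun v => v 0 = c).
Proof.
have := st_point HD c; apply: D_ext => x.
rewrite (rv_val _ (i:=0)) //.
have hx : forall o : 'I_1, o = ord0 by move=> o; apply: val_inj; case: o => [[|]].
by rewrite (hx (Ordinal _)).
Qed.

Lemma Def_const k p c : p < k -> Def k (fun v => v p = c).
Proof.
move=> hp.
apply: Def_ext (@Def_ex k (fun y v => y = c /\ y = v p) _) => [v|].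
  split; [by case=> y [<- <-]| move=> <-; by exists (v p)].
apply: Def_and.
  apply: (Def_weak (Def_pt0 c)); last lia.
  by move=> v w h; rewrite h.
by apply: Def_diag; lia.
Qed.


Lemma Def_all_fin k a (P : 'I_a -> (nat -> M) -> Prop) :
  (forall j, Def k (P j)) -> Def k (fun v => forall j, P j v).
Proof.
move=> h.
have G : forall s : seq 'I_a, Def k (fun v => forall j, j \in s -> P j v).
  elim=> [|j s IH].
    apply: Def_ext (Def_True k) => v; split=> // _ j; by rewrite in_nil.
  apply: Def_ext (Def_and (h j) IH) => v; split.
    by case=> h1 h2 j'; rewrite in_cons => /orP [/eqP ->|]; [|apply: h2].
  move=> H; split; [apply: H; exact: mem_head | move=> j' hj'; apply: H; by rewrite in_cons hj' orbT].
apply: Def_ext (G (enum 'I_a)) => v; split=> H j; [apply: H; by rewrite mem_enum | by move=> _; apply: H].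
Qed.

Lemma Def_ex_tup a k (Q : tup M a -> (nat -> M) -> Prop) :
  Def (a + k) (fun w => Q (tv a w) (shiftn a w)) -> Def k (fun v => exists y : tup M a, Q y v).
Proof.
elim: a k Q => [|a IH] k Q h.
  apply: Def_ext h => v.
  have E : shiftn 0 v = v by apply: functional_extensionality.
  rewrite E; split; first by move=> hq; exists (tv 0 v).
  case=> y hy. by have -> : tv 0 v = y by apply: tup_ext => -[].
have h3 : Def k (fun v => exists y' : tup M a, exists z, Q (snoc y' z) v).
  apply: (IH k (fun y' v => exists z, Q (snoc y' z) v)).
  apply: (@Def_ex (a + k) (fun z w => Q (snoc (tv a w) z) (shiftn a w))).
  apply: Def_ext h => w.
  suff [-> ->] : tv a.+1 w = snoc (tv a (shift w)) (w 0) /\ shiftn a.+1 w = shiftn a (shift w) by [].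
  split; last by apply: functional_extensionality.
  apply: tup_ext => j; rewrite /snoc /tv /shift; case: unliftP => [j' ->|->] /=.
    rewrite /bump. have hj := ltn_ord j'. simpl in hj. case: leqP => ? //=; f_equal; lia.
  by rewrite subnn.
apply: Def_ext h3 => v.
split; [case=> y' [z hq]; by exists (snoc y' z)|].
case=> y hy; exists (fun j => y (widen_ord (leqnSn a) j)); exists (y ord_max).
suff -> : snoc (fun j => y (widen_ord (leqnSn a) j)) (y ord_max) = y by [].
apply: tup_ext => j; rewrite /snoc; case: unliftP => [j' ->|->] //.
f_equal; apply: val_inj => /=. rewrite /bump. have hj := ltn_ord j'. simpl in hj. case: leqP => ? //=; lia.
Qed.

Lemma Def_all_tup a k (Q : tup M a -> (nat -> M) -> Prop) :
  Def (a + k) (fun w => Q (tv a w) (shiftn a w)) -> Def k (fun v => forall y : tup M a, Q y v).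
Proof.
move=> h; apply: Def_ext (Def_not (@Def_ex_tup a k (fun y v => ~ Q y v) (Def_not h))) => v.
split; [move=> H y; apply: NNPP => hn; apply: H; by exists y | move=> H [y hy]; exact: hy (H y)].
Qed.

Definition ev (v : nat -> M) (t : nat + M) : M := match t with inl p => v p | inr c => c end.
Definition tb k (t : nat + M) : Prop := match t with inl p => p < k | inr _ => True end.

Lemma Def_eqt k s t : tb k s -> tb k t -> Def k (fun v => ev v s = ev v t).
Proof.
case: s => [p|c]; case: t => [q|d] /= hs ht.
- exact: Def_diag.
- exact: Def_const.
- apply: Def_ext (Def_const c ht) => v; split=> E; by rewrite E.
- case: (classic (c = d)) => E.
    apply: Def_ext (Def_True k) => v; tauto.
  apply: Def_ext (Def_False k) => v; tauto.
Qed.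

Definition sh a (t : nat + M) : nat + M := match t with inl p => inl (a + p) | inr c => inr c end.

Lemma Def_atom a (A : pset M a) k (g : 'I_a -> nat + M) :
  D a A -> (forall j, tb k (g j)) -> Def k (fun v => A (fun j => ev v (g j))).
Proof.
move=> hA hg.
have E : forall v, A (fun j => ev v (g j)) <-> exists y : tup M a, A y /\ forall j, y j = ev v (g j).
  move=> v; split; [move=> h; by exists (fun j => ev v (g j)) | case=> y [hy hy']].
  by have <- : y = (fun j => ev v (g j)) by apply: tup_ext.
apply: Def_ext (fun v => iff_sym (E v)) _.
apply: (@Def_ex_tup a k (fun y v => A y /\ forall j, y j = ev v (g j))).
apply: Def_and.
  apply: (Def_weak (D_Def hA)); last lia.
  move=> v w hvw; suff -> : tv a v = tv a w by [].
  apply: tup_ext => j; rewrite /tv; apply: hvw; have := ltn_ord j; lia.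
apply: Def_all_fin => j.
have := @Def_eqt (a + k) (inl (a - j.+1)) (sh a (g j)).
have := hg j; case: (g j) => [p|c] /= hp.
  move=> H; apply: H; have := ltn_ord j; lia.
move=> H; apply: H => //; have := ltn_ord j; lia.
Qed.

Lemma Def_atom' a (A : pset M a) k (h : (nat -> M) -> tup M a) :
  D a A -> (forall j, exists t, tb k t /\ forall v, h v j = ev v t) -> Def k (fun v => A (h v)).
Proof.
move=> hA hj; have [g hg] := fin_all_exists hj.
apply: Def_ext (Def_atom hA (fun j => proj1 (hg j))) => v.
suff -> : h v = (fun j => ev v (g j)) by [].
apply: tup_ext => j; exact: (proj2 (hg j)).
Qed.

Lemma Def_rel2 (R : M -> M -> Prop) k s t :
  D 2 (fun x => R (x ord0) (x ord_max)) -> tb k s -> tb k t -> Def k (fun v => R (ev v s) (ev v t)).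
Proof.
move=> hR hs ht.
have := @Def_atom 2 _ k (fun j => if val j == 0 then s else t) hR.
by apply => -[[|[|]]].
Qed.

End DefFW.



Ltac addb := repeat match goal with
 | o : 'I_?n |- _ => lazymatch goal with | _ : is_true (nat_of_ord o < n) |- _ => fail | _ => have := ltn_ord o; intro end
 end.

Ltac csplit := repeat match goal with
 | |- context[split ?j] => let j' := fresh "j" in let E := fresh "E" in case: (splitP j) => j' E
 | |- context[?a == ?b] => let E := fresh "E" in case: (@eqP _ a b) => E
 | |- context[unlift ord_max ?j] => let j' := fresh "j" in let E := fresh "E" in case: (unliftP ord_max j) => [j' /(congr1 val) /= E | /(congr1 val) /= E]
 end.

Ltac comp_end := first [ eexists (inl _); split; [ | move=> ?; reflexivity ] | eexists (inr _); split; [ | move=> ?; reflexivity ] ];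
  rewrite /tb; addb; try lia.

Definition upd (M : Type) n (i : 'I_n) (x : tup M n) (u : M) : tup M n :=
  fun j => if j == i then u else x j.

Ltac unf := rewrite /upd /concat /fstp /sndp /snoc /tv /shift /shiftn /=.

Ltac comp := let j := fresh "j" in move=> j; unf; csplit; comp_end.

Section G.
Variable M : Type.
Variable D : forall n, pset M n -> Prop.
Arguments D : clear implicits.
Hypothesis HD : is_structure D.
Variable a0 : M.

Lemma D_fiber m n (Z : pset M (m + n)) (t : tup M m) : D (m + n) Z -> D n (fiber Z t).
Proof.
move=> hZ; apply: (Def_DE (a0:=a0)).
apply: (Def_atom' HD a0 hZ). comp.
Qed.


Lemma Def_R2 (R : M -> M -> Prop) k (e1 e2 : (nat -> M) -> M) :
  D 2 (fun x => R (x ord0) (x ord_max)) ->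
  (exists s, tb k s /\ forall v, e1 v = ev v s) ->
  (exists t, tb k t /\ forall v, e2 v = ev v t) ->
  Def D a0 k (fun v => R (e1 v) (e2 v)).
Proof.
move=> hR [s [hs E1]] [t [ht E2]].
apply: Def_ext (Def_rel2 HD a0 hR hs ht) => v; by rewrite E1 E2.
Qed.

Lemma Def_eq2 k (e1 e2 : (nat -> M) -> M) :
  (exists s, tb k s /\ forall v, e1 v = ev v s) ->
  (exists t, tb k t /\ forall v, e2 v = ev v t) ->
  Def D a0 k (fun v => e1 v = e2 v).
Proof.
move=> [s [hs E1]] [t [ht E2]].
apply: Def_ext (Def_eqt HD a0 hs ht) => v; by rewrite E1 E2.
Qed.

Lemma Def_constP k (P : Prop) : Def D a0 k (fun _ => P).
Proof.
case: (classic P) => h.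
  apply: Def_ext (Def_True HD a0 k) => v; tauto.
apply: Def_ext (Def_False HD a0 k) => v; tauto.
Qed.

Lemma Def_atomR n (R : tup M n -> M -> Prop) k (hx : (nat -> M) -> tup M n) (hu : (nat -> M) -> M) :
  D (n + 1) (fun z => R (fstp z) (sndp z ord0)) ->
  (forall j, exists t, tb k t /\ forall v, hx v j = ev v t) ->
  (exists t, tb k t /\ forall v, hu v = ev v t) ->
  Def D a0 k (fun v => R (hx v) (hu v)).
Proof.
move=> hR hj hk.
have := Def_atom' HD a0 (h := fun v => concat (hx v) (fun _ => hu v)) hR.
have E1 : forall (x : tup M n) (y : tup M 1), fstp (concat x y) = x.
  move=> x y; apply: tup_ext => j; rewrite /fstp /concat; case: splitP => j' /= E; [f_equal; exact: val_inj | have := ltn_ord j; lia].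
have E2 : forall (x : tup M n) (y : tup M 1), sndp (concat x y) ord0 = y ord0.
  move=> x y; rewrite /sndp /concat; case: splitP => j' /= E; [have := ltn_ord j'; lia | f_equal; apply: val_inj => /=; lia].
move=> H; apply: Def_ext (H k _) => [v|]; first by rewrite E1 E2.
move=> j; rewrite /concat; case: splitP => j' E; [exact: hj | exact: hk].
Qed.

End G.

Ltac tcomp := unf; csplit; comp_end.

Ltac dstep HD a0 :=
  first [ apply: (Def_constP HD a0)
        | apply: (Def_eq2 HD a0); tcomp
        | match goal with H : _ |- _ => apply: (Def_R2 HD a0 H); tcomp end
        | match goal with H : _ |- _ => apply: (Def_atom' HD a0 H); comp end
        | match goal with H : _ |- _ => apply: (Def_atomR HD a0 H); [comp | tcomp] end
        | apply: (Def_and HD)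
        | apply: (Def_or HD)
        | apply: (Def_not HD)
        | apply: (Def_iff HD)
        | apply: (Def_imp HD)
        | apply: (Def_ex HD)
        | apply: (Def_all HD)
        | apply: (Def_ex_tup HD)
        | apply: (Def_all_tup HD)
        | apply: (Def_all_fin HD); intro
        | apply: (Def_True HD)
        | apply: (Def_False HD) ].

Ltac dauto HD a0 := repeat (dstep HD a0).




Definition ole (a b : option nat) : Prop :=
  match a, b with
  | None, _ => True
  | Some _, None => False
  | Some x, Some y => x <= y
  end.

Lemma ole_refl a : ole a a. Proof. by case: a => //=. Qed.
Lemma ole_trans a b c : ole a b -> ole b c -> ole a c.
Proof. case: a => [x|] //; case: b => [y|] //; case: c => [z|] //= ; lia. Qed.
Lemma ole_omaxl a b : ole a (omax a b). Proof. case: a => [x|] //; case: b => [y|] //=; lia. Qed.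
Lemma ole_omaxr a b : ole b (omax a b). Proof. case: a => [x|] //; case: b => [y|] //=; lia. Qed.
Lemma olt_ole a b k : ole a b -> olt b k -> olt a k.
Proof. case: a => [x|] //; case: b => [y|] //= ; lia. Qed.
Lemma olt_omax a b k : olt a k -> olt b k -> olt (omax a b) k.
Proof. case: a => [x|] //; case: b => [y|] //= ; lia. Qed.
Lemma olt_le a k k' : olt a k -> k <= k' -> olt a k'.
Proof. case: a => [x|] //= ; lia. Qed.

Lemma fstp_concat (M : Type) m n (t : tup M m) (x : tup M n) : fstp (concat t x) = t.
Proof. apply: tup_ext => j; rewrite /fstp /concat; case: splitP => j' /= E; [f_equal; exact: val_inj | have := ltn_ord j; lia]. Qed.

Lemma sndp_concat (M : Type) m n (t : tup M m) (x : tup M n) : sndp (concat t x) = x.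
Proof. apply: tup_ext => j; rewrite /sndp /concat; case: splitP => j' /= E; [have := ltn_ord j'; lia | f_equal; apply: val_inj => /=; lia]. Qed.

Lemma upd_same (M : Type) n (i : 'I_n) (x : tup M n) : upd i x (x i) = x.
Proof. apply: tup_ext => j; rewrite /upd; case: eqP => [->|] //. Qed.

Lemma upd_upd (M : Type) n (i : 'I_n) (x : tup M n) u u' : upd i (upd i x u) u' = upd i x u'.
Proof. apply: tup_ext => j; rewrite /upd; case: eqP => //. Qed.

Lemma upd_at (M : Type) n (i : 'I_n) (x : tup M n) u : upd i x u i = u.
Proof. by rewrite /upd eqxx. Qed.

Section Main.
Variable M : Type.
Variable lt : M -> M -> Prop.
Variables DM DN : forall n, pset M n -> Prop.
Variable dim : forall n, pset M n -> option nat.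
Arguments DM : clear implicits.
Arguments DN : clear implicits.
Arguments dim : clear implicits.
Hypothesis Hom : o_minimal lt DM.
Hypothesis HN : is_structure DN.
Hypothesis Hexp : expands DM DN.
Hypothesis Hopen : open_definable_L lt DM DN.
Hypothesis Hdim : dim_compatible lt DM DN dim.
Variable a0 : M.

Let HM : is_structure DM := om_struct Hom.
Let Hlo : dlo lt := om_dlo Hom.

Lemma lt_irr x : ~ lt x x. Proof. exact: (dlo_irrefl Hlo). Qed.
Lemma lt_trans x y z : lt x y -> lt y z -> lt x z. Proof. exact: (dlo_trans Hlo). Qed.
Lemma lt_total x y : lt x y \/ x = y \/ lt y x. Proof. exact: (dlo_total Hlo). Qed.
Lemma lt_dense x y : lt x y -> exists z, lt x z /\ lt z y. Proof. exact: (dlo_dense Hlo). Qed.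
Lemma lt_nomax x : exists y, lt x y. Proof. exact: (dlo_nomax Hlo). Qed.
Lemma lt_nomin x : exists y, lt y x. Proof. exact: (dlo_nomin Hlo). Qed.
Lemma lt_asym x y : lt x y -> ~ lt y x.
Proof. move=> h1 h2; exact: lt_irr (lt_trans h1 h2). Qed.

Definition le x y := lt x y \/ x = y.
Lemma le_antisym x y : le x y -> le y x -> x = y.
Proof. case=> [h|//]; case=> [h'|//]; exfalso; exact: lt_asym h h'. Qed.

Lemma DltM : DM 2 (fun x => lt (x ord0) (x ord_max)). Proof. exact: om_lt Hom. Qed.
Lemma DltN : DN 2 (fun x => lt (x ord0) (x ord_max)). Proof. exact: Hexp DltM. Qed.

Lemma dim_ext n (X Y : pset M n) : (forall x, X x <-> Y x) -> dim n X = dim n Y.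
Proof. by move=> h; rewrite (pset_ext h). Qed.

Lemma dim_mono n (X Y : pset M n) : DN n X -> DN n Y -> (forall x, X x -> Y x) -> ole (dim n X) (dim n Y).
Proof.
move=> hX hY hXY.
have E : dim n Y = omax (dim n X) (dim n Y).
  rewrite -(D2 Hdim hX hY); apply: dim_ext => x; split; [by right|by case=> // /hXY].
rewrite E; exact: ole_omaxl.
Qed.

Lemma dim_none n (X : pset M n) : DN n X -> (forall x, ~ X x) -> dim n X = None.
Proof. move=> hX h; exact: (proj2 (D1_empty Hdim hX) h). Qed.

Lemma dim_some n (X : pset M n) x : DN n X -> X x -> exists d, dim n X = Some d.
Proof.
move=> hX hx; case E: (dim n X) => [d|]; first by exists d.
by have := proj1 (D1_empty Hdim hX) E x.
Qed.

Lemma card_inj d n (sigma : 'I_d -> 'I_n) : injective sigma -> d <= n.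
Proof. move=> h; have := leq_card sigma h; by rewrite !card_ord. Qed.

Lemma dim_full n : dim n (fun _ => True) = Some n.
Proof.
have hT : DM n (fun _ => True).
  apply: D_ext (st_compl HM (st_empty HM n)) => x; tauto.
have := D5 Hdim hT.
case E: (dim n (fun _ => True)) => [d|] /=.
  case=> [[sigma [hs _]] hmax].
  have := card_inj hs => h1.
  have h2 : n <= d.
    apply: (hmax n id) => //.
    have [am ham] := lt_nomin a0; have [ap hap] := lt_nomax a0.
    exists (fun _ => a0); split; first by exists (fun _ => a0).
    exists (fun _ => am), (fun _ => ap); split; first by move=> i.
    by move=> y _; exists y.
  by have -> : d = n by lia.
by move=> h; exfalso; exact: (h (fun _ => a0) I).
Qed.

Definition int1 (A : M -> Prop) := exists a b, lt a b /\ forall u, lt a u -> lt u b -> A u.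
Definition p1 (A : M -> Prop) : pset M 1 := fun t => A (t ord0).

Lemma ord1_eq (o : 'I_1) : o = ord0.
Proof. apply: val_inj; by case: o => [[|]]. Qed.

Lemma dim1_le (X : pset M 1) : DN 1 X -> ole (dim 1 X) (Some 1).
Proof.
move=> hX; rewrite -(D1_line Hdim); apply: dim_mono => //.
apply: D_ext (st_compl HN (st_empty HN 1)) => x; tauto.
Qed.

Lemma dim1_int (A : M -> Prop) : DM 1 (p1 A) -> (int1 A <-> dim 1 (p1 A) = Some 1).
Proof.
move=> hA; have hod := D5 Hdim hA.
have hle := dim1_le (Hexp hA).
split.
  case=> a [b [hab hin]].
  have [u [hu1 hu2]] := lt_dense hab.
  have [d E] := dim_some (x:=fun _ => u) (Hexp hA) (hin u hu1 hu2).
  rewrite E in hle hod *; case: hod => _ hmax.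
  have : 1 <= d.
    apply: (hmax 1 id) => //.
    exists (fun _ => u); split; first by exists (fun _ => u); split=> //; exact: hin.
    exists (fun _ => a), (fun _ => b); split; first by move=> i.
    move=> y hy; exists y; split=> //; rewrite /p1; have [h1 h2] := hy ord0; exact: hin.
  move: hle => /=; move=> h1 h2; f_equal; lia.
move=> E; rewrite E /= in hod; case: hod => [[sigma [_ [x [_ [a [b [hx hy]]]]]]] _].
exists (a ord0), (b ord0); split.
  have [h1 h2] := hx ord0; exact: lt_trans h1 h2.
move=> u h1 h2.
have [x' [hx' hxs]] : cproj sigma (p1 A) (fun _ => u).
  apply: hy => i; by rewrite (ord1_eq i).
rewrite /p1 in hx'. by rewrite (hxs ord0) (ord1_eq (sigma ord0)).
Qed.

Lemma dim1_noint (A : M -> Prop) : DM 1 (p1 A) -> ~ int1 A -> ole (dim 1 (p1 A)) (Some 0).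
Proof.
move=> hA hn; have := dim1_le (Hexp hA).
case E: (dim 1 (p1 A)) => [d|] //= h.
case: d h E => [|[|d]] //= _ E.
by exfalso; apply: hn; apply/(dim1_int hA).
Qed.


Lemma line_dim n (i : 'I_n) (x : tup M n) (U : pset M 1) : DN 1 U ->
  dim n (fun w => (forall j, j != i -> w j = x j) /\ U (fun _ => w i)) = dim 1 U.
Proof.
move=> hU; symmetry.
apply: (D4 Hdim (f := fun u => upd i x (u ord0))) => //.
- apply: (Def_DE (a0:=a0)); dauto HN a0.
- apply: (Def_DE (a0:=a0)); dauto HN a0.
- move=> u hu; split.
    by move=> j hj; rewrite /upd (negbTE hj).
  by rewrite /upd eqxx; have -> : (fun _ : 'I_1 => u ord0) = u by apply: tup_ext => o; rewrite (ord1_eq o).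
- move=> u u' _ _ E. have := congr1 (fun w => w i) E; rewrite /upd eqxx => E'.
  apply: tup_ext => o; by rewrite (ord1_eq o).
- move=> w [hw1 hw2]; exists (fun _ => w i); split=> //.
  apply: tup_ext => j; rewrite /upd; case: eqP => [->|/eqP hj] //; by rewrite hw1.
Qed.

Lemma p1_fiber n (R : tup M n -> M -> Prop) (t : tup M n) :
  DN (n + 1) (fun z => R (fstp z) (sndp z ord0)) -> DN 1 (p1 (R t)).
Proof.
move=> h; have := D_fiber HN a0 t h; apply: D_ext => y.
by rewrite /fiber /p1 fstp_concat sndp_concat.
Qed.

Section Fam.
Variables (n : nat) (i : 'I_n) (I : pset M n) (R : tup M n -> M -> Prop).
Hypothesis hI : DN n I.
Hypothesis hR : DN (n + 1) (fun z => R (fstp z) (sndp z ord0)).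
Hypothesis hdisj : forall x x' u u', I x -> I x' -> R x u -> R x' u' -> upd i x u = upd i x' u' -> x = x'.

Let W : pset M (n + n) := fun z => I (fstp z) /\ exists u, R (fstp z) u /\ forall j, sndp z j = upd i (fstp z) u j.

Let hW : DN (n + n) W.
Proof. apply: (Def_DE (a0:=a0)); dauto HN a0. Qed.

Let Wdisj : forall t t', I t -> I t' -> t <> t' -> forall x, ~ (fiber W t x /\ fiber W t' x).
Proof.
move=> t t' ht ht' ne x; rewrite /fiber /W !fstp_concat !sndp_concat.
case=> [[_ [u [hu E]]] [_ [u' [hu' E']]]]; apply: ne; apply: (hdisj ht ht' hu hu').
by apply: tup_ext => j; rewrite -E -E'.
Qed.

Let Wfib t : I t -> dim n (fiber W t) = dim 1 (p1 (R t)).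
Proof.
move=> ht; rewrite -(line_dim i t (p1_fiber t hR)).
apply: dim_ext => w; rewrite /fiber /W fstp_concat sndp_concat /p1; split.
  case=> _ [u [hu E]]; split.
    by move=> j hj; rewrite E /upd (negbTE hj).
  by rewrite E upd_at.
case=> h1 h2; split=> //; exists (w i); split=> // j.
rewrite /upd; case: eqP => [->|/eqP hj] //; exact: h1.
Qed.

Lemma fam_def d : DN n (fun x => I x /\ dim 1 (p1 (R x)) = d).
Proof.
have := D3a Hdim hI hW Wdisj d; apply: D_ext => x; split; case=> hx E; split=> //;
  by rewrite ?(Wfib hx) // -(Wfib hx).
Qed.

Lemma fam_dim e : (forall x, I x -> dim 1 (p1 (R x)) = Some e) ->
  dim n (fun w => exists x, I x /\ exists u, R x u /\ w = upd i x u) = oadd (dim n I) (Some e).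
Proof.
move=> he.
have := D3b Hdim hI hW Wdisj (k:=Some e) (fun t ht => etrans (Wfib ht) (he t ht)).
move=> <-; apply: dim_ext => w; split.
  case=> x [hx [u [hu ->]]]; exists x; split=> //.
  rewrite /fiber /W fstp_concat sndp_concat; split=> //; by exists u.
case=> t [ht]; rewrite /fiber /W fstp_concat sndp_concat; case=> _ [u [hu E]].
exists t; split=> //; exists u; split=> //; exact: tup_ext.
Qed.

End Fam.

End Main.



Section Main2.
Variable M : Type.
Variable lt : M -> M -> Prop.
Variables DM DN : forall n, pset M n -> Prop.
Variable dim : forall n, pset M n -> option nat.
Arguments DM : clear implicits.
Arguments DN : clear implicits.
Arguments dim : clear implicits.
Hypothesis Hom : o_minimal lt DM.
Hypothesis HN : is_structure DN.
Hypothesis Hexp : expands DM DN.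
Hypothesis Hopen : open_definable_L lt DM DN.
Hypothesis Hdim : dim_compatible lt DM DN dim.
Variable a0 : M.

Let HM : is_structure DM := om_struct Hom.

Definition Pi n (i : 'I_n) (Z : pset M n) : pset M n := fun p => p i = a0 /\ exists u, Z (upd i p u).

Lemma Pi_def n (i : 'I_n) (Z : pset M n) (D : forall n, pset M n -> Prop) :
  is_structure D -> D n Z -> D n (Pi i Z).
Proof. move=> HD hZ; apply: (Def_DE (a0:=a0)); rewrite /Pi; dauto HD a0. Qed.

Definition updrel n (i : 'I_n) (Z : pset M n) (p : tup M n) (u : M) := Z (upd i p u).

Lemma updrel_def n (i : 'I_n) (Z : pset M n) (D : forall n, pset M n -> Prop) :
  is_structure D -> D n Z -> D (n + 1) (fun z => updrel i Z (fstp z) (sndp z ord0)).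
Proof. move=> HD hZ; apply: (Def_DE (a0:=a0)); rewrite /updrel; dauto HD a0. Qed.

Lemma fib_dim n (i : 'I_n) (Z : pset M n) e : DN n Z ->
  (forall x, Z x -> dim 1 (p1 (fun u => Z (upd i x u))) = Some e) ->
  dim n Z = oadd (dim n (Pi i Z)) (Some e).
Proof.
move=> hZ he.
have hI := Pi_def i HN hZ.
have hR := updrel_def i HN hZ.
have hdisj : forall x x' u u', Pi i Z x -> Pi i Z x' -> updrel i Z x u -> updrel i Z x' u' -> upd i x u = upd i x' u' -> x = x'.
  move=> x x' u u' [hx _] [hx' _] _ _ E; apply: tup_ext => j.
  case: (j =P i) => [->|/eqP hj]; first by rewrite hx hx'.
  by have := congr1 (fun w => w j) E; rewrite /upd (negbTE hj).
have Hf : forall x, Pi i Z x -> dim 1 (p1 (updrel i Z x)) = Some e.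
  move=> x [_ [u hu]].
  rewrite -(he _ hu); apply: dim_ext => t; by rewrite /p1 /updrel upd_upd.
have := fam_dim HN Hdim a0 hI hR hdisj Hf.
rewrite /updrel => <-.
apply: dim_ext => w; split.
  move=> hw; exists (upd i w a0); split.
    split; first by rewrite upd_at.
    by exists (w i); rewrite upd_upd upd_same.
  by exists (w i); rewrite upd_upd upd_same.
by case=> x [_ [u [hu ->]]].
Qed.

Lemma graph_pt n (X : pset M n) (g : tup M n -> M) x c :
  graph X (fun x (_ : 'I_1) => g x) (concat x (fun _ => c)) <-> X x /\ c = g x.
Proof.
rewrite /graph fstp_concat sndp_concat.
split; [case=> h1 h2; split=> //; exact: h2 ord0 | case=> h1 h2; by split].
Qed.

Lemma rel_graph n (R : tup M n -> M -> Prop) (F : tup M n -> M) (D : forall n, pset M n -> Prop) :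
  (forall x, R x (F x)) -> (forall x c c', R x c -> R x c' -> c = c') ->
  D (n + 1) (fun z => R (fstp z) (sndp z ord0)) ->
  D (n + 1) (graph (fun _ => True) (fun x (_ : 'I_1) => F x)).
Proof.
move=> hF hu hD; apply: D_ext hD => z; rewrite /graph; split.
  move=> h; split=> // j; rewrite (ord1_eq j); exact: hu h (hF _).
by case=> _ h; rewrite (h ord0).
Qed.

Lemma fun_of_rel n (R : tup M n -> M -> Prop) : (forall x, exists c, R x c) -> exists F, forall x, R x (F x).
Proof.
move=> h; exists (fun x => epsilon (inhabits a0) (R x)) => x.
exact: epsilon_spec (h x).
Qed.

Definition Exc n (X : pset M n) (f F : tup M n -> M) : pset M n := fun x => X x /\ f x <> F x.

Lemma Exc_def n (X : pset M n) (f F : tup M n -> M) :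
  DN (n + 1) (graph X (fun x (_ : 'I_1) => f x)) -> DN (n + 1) (graph (fun _ => True) (fun x (_ : 'I_1) => F x)) ->
  DN n (Exc X f F).
Proof.
move=> h1 h2.
have : DN n (fun x => exists c, graph X (fun x (_ : 'I_1) => f x) (concat x (fun _ => c)) /\
                       ~ graph (fun _ => True) (fun x (_ : 'I_1) => F x) (concat x (fun _ => c))).
  apply: (Def_DE (a0:=a0)); dauto HN a0.
apply: D_ext => x; split.
  case=> c [/graph_pt [hx ->]]; rewrite graph_pt => hn; split=> // E; apply: hn; by rewrite E.
case=> hx hne; exists (f x); rewrite !graph_pt; split=> //; case=> _ E; exact: hne E.
Qed.

Definition cyl n (i : nat) (C : pset M n) := forall x y, (forall j : 'I_n, j < i -> x j = y j) -> C x -> C y.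

Definition Qi n (i : nat) := forall (C X : pset M n) (f : tup M n -> M),
  DM n C -> cyl i C -> DN n X -> (forall x, X x -> C x) ->
  DN (n + 1) (graph X (fun x (_ : 'I_1) => f x)) ->
  exists F, DM (n + 1) (graph (fun _ => True) (fun x (_ : 'I_1) => F x)) /\
    forall c, dim n C = Some c -> olt (dim n (Exc X f F)) c.

Lemma Q0 n : Qi n 0.
Proof.
move=> C X f hC hcyl hX hXC hg.
pose R := fun x c => (X x /\ c = f x) \/ (~ X x /\ c = a0).
have [g hgR] := fun_of_rel (R := R) (fun x => ltac:(case: (classic (X x)) => h; [exists (f x); by left | exists a0; by right])).
have hRd : DN (n + 1) (fun z => R (fstp z) (sndp z ord0)).
  have : DN (n + 1) (fun z => graph X (fun x (_ : 'I_1) => f x) (concat (fstp z) (fun _ => sndp z ord0)) \/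
                        (~ X (fstp z) /\ sndp z ord0 = a0)).
    apply: (Def_DE (a0:=a0)); dauto HN a0.
  apply: D_ext => z; by rewrite graph_pt.
have hgg : DN (n + 1) (graph (fun _ => True) (fun x (_ : 'I_1) => g x)).
  apply: (rel_graph (R := R)) => //.
  move=> x c c' [[h1 ->]|[h1 ->]] [[h2 ->]|[h2 ->]] //; by exfalso.
have [F [hF [S [hS [hSd hSF]]]]] := D6 Hdim hgg.
exists F; split=> // c hc.
have [x0 hx0] : exists x0, C x0.
  apply: NNPP => hn; move: hc; rewrite (dim_none Hdim (Hexp hC)) // => x hx; apply: hn; by exists x.
have Cfull : forall x, C x by move=> x; apply: hcyl hx0 => j.
have EC : dim n C = Some n.
  rewrite -(dim_full Hom Hdim a0 n); apply: dim_ext => x; split=> // _; exact: Cfull.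
rewrite EC in hc; case: hc => <-.
apply: olt_ole hSd.
apply: (dim_mono Hdim (Exc_def hg (Hexp hF)) hS) => x [hx hne].
apply: NNPP => hnS; apply: hne; rewrite -hSF //.
by case: (hgR x) => [[_ ->]|[]].
Qed.

End Main2.



Section Step.
Variable M : Type.
Variable lt : M -> M -> Prop.
Variables DM DN : forall n, pset M n -> Prop.
Variable dim : forall n, pset M n -> option nat.
Arguments DM : clear implicits.
Arguments DN : clear implicits.
Arguments dim : clear implicits.
Hypothesis Hom : o_minimal lt DM.
Hypothesis HN : is_structure DN.
Hypothesis Hexp : expands DM DN.
Hypothesis Hdim : dim_compatible lt DM DN dim.
Variable a0 : M.

Let HM : is_structure DM := om_struct Hom.
Let DltM : DM 2 (fun x => lt (x ord0) (x ord_max)) := om_lt Hom.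
Let DltN : DN 2 (fun x => lt (x ord0) (x ord_max)) := Hexp DltM.

Lemma le_tr x y z : le lt x y -> le lt y z -> le lt x z.
Proof.
case=> [h1|->] //; case=> [h2|<-]; [left; exact: (lt_trans Hom h1 h2) | by left].
Qed.

Lemma lt_le_tr x y z : lt x y -> le lt y z -> lt x z.
Proof. move=> h1; case=> [h2|<-] //; exact: (lt_trans Hom h1 h2). Qed.

Lemma below_pts p (pts : 'I_p -> M) a : exists z, lt z a /\ forall j, lt (pts j) a -> le lt (pts j) z.
Proof.
elim: p pts => [|p IH] pts.
  have [z hz] := lt_nomin Hom a; exists z; split=> // -[m hm]; by [].
have [z [hz hj]] := IH (fun j => pts (lift ord0 j)).
case: (lt_total Hom (pts ord0) a) => [hq|hq].
  case: (lt_total Hom (pts ord0) z) => [hqz|hqz].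
    exists z; split=> // j; case: (unliftP ord0 j) => [j' ->|->]; [exact: hj | by left].
  have hzq : le lt z (pts ord0) by case: hqz => [->|h]; [right|left].
  exists (pts ord0); split=> // j; case: (unliftP ord0 j) => [j' ->|->] hjl; last by right.
  exact: le_tr (hj j' hjl) hzq.
exists z; split=> // j; case: (unliftP ord0 j) => [j' ->|->]; first exact: hj.
move=> hl; exfalso; case: hq => [E|h]; [rewrite E in hl; exact: (lt_irr Hom hl) | exact: (lt_asym Hom hl h)].
Qed.

Lemma fin_of_noint (A : M -> Prop) : DM 1 (p1 A) -> ~ int1 lt A ->
  exists p (pts : 'I_p -> M), forall u, A u -> exists j, u = pts j.
Proof.
move=> hA hn; have [p [q [pts [ivs h]]]] := om_omin Hom hA.
exists p, pts => u hu.
have := proj1 (h (fun _ => u)) hu; case=> [//|[j hj]].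
exfalso; apply: hn; rewrite /in_interval in hj.
have [a [hau ha]] : exists a, lt a u /\ forall w, lt a w -> match (ivs j).1 with Some a => lt a w | None => True end.
  case: (ivs j).1 hj => [a' [h1 _]|_]; first by exists a'.
  have [a hau] := lt_nomin Hom u; by exists a.
have [b [hub hb]] : exists b, lt u b /\ forall w, lt w b -> match (ivs j).2 with Some b => lt w b | None => True end.
  case: (ivs j).2 hj => [b' [_ h2]|_]; first by exists b'.
  have [b hub] := lt_nomax Hom u; by exists b.
exists a, b; split; first exact: (lt_trans Hom hau hub).
move=> w h1 h2; apply: (proj2 (h (fun _ => w))); right; exists j; split; [exact: ha | exact: hb].
Qed.

Section S.
Variables (n : nat) (ii : 'I_n) (C X : pset M n) (f : tup M n -> M).
Hypothesis hC : DM n C.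
Hypothesis hcyl : cyl ii.+1 C.
Hypothesis hX : DN n X.
Hypothesis hXC : forall x, X x -> C x.
Hypothesis hg : DN (n + 1) (graph X (fun x (_ : 'I_1) => f x)).

Definition Fb x u := C (upd ii x u).
Definition Cinf x := C x /\ int1 lt (Fb x).
Definition Cfin x := C x /\ ~ int1 lt (Fb x).
Definition Bi x := exists u, Cinf (upd ii x u).
Definition Bf x := exists u, Cfin (upd ii x u).
Definition SR x y := Cfin (upd ii x y) /\ le lt (x ii) y /\ forall y', Cfin (upd ii x y') -> le lt (x ii) y' -> le lt y y'.
Definition Xt x := exists y, SR x y /\ X (upd ii x y).
Definition sc x := epsilon (inhabits a0) (SR x).
Definition ft x := f (upd ii x (sc x)).
Definition Xinf x := X x /\ Cinf x.
Definition Xfin x := X x /\ Cfin x.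

Lemma Fb_upd x u : Fb (upd ii x u) = Fb x.
Proof. apply: functional_extensionality => w; by rewrite /Fb upd_upd. Qed.

Lemma hCinf : DM n Cinf.
Proof. apply: (Def_DE (a0:=a0)); rewrite /Cinf /int1 /Fb; dauto HM a0. Qed.
Lemma hCfin : DM n Cfin.
Proof. apply: (Def_DE (a0:=a0)); rewrite /Cfin /int1 /Fb; dauto HM a0. Qed.
Lemma hBi : DM n Bi.
Proof. have := hCinf => h; apply: (Def_DE (a0:=a0)); rewrite /Bi; dauto HM a0. Qed.
Lemma hBf : DM n Bf.
Proof. have := hCfin => h; apply: (Def_DE (a0:=a0)); rewrite /Bf; dauto HM a0. Qed.
Lemma hSR : DM (n + 1) (fun z => SR (fstp z) (sndp z ord0)).
Proof. have := hCfin => h; apply: (Def_DE (a0:=a0)); rewrite /SR /le; dauto HM a0. Qed.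
Lemma hXinf : DN n Xinf.
Proof. have := Hexp hCinf => h; apply: (Def_DE (a0:=a0)); rewrite /Xinf; dauto HN a0. Qed.
Lemma hXfin : DN n Xfin.
Proof. have := Hexp hCfin => h; apply: (Def_DE (a0:=a0)); rewrite /Xfin; dauto HN a0. Qed.

Lemma hgXinf : DN (n + 1) (graph Xinf (fun x (_ : 'I_1) => f x)).
Proof.
have h := Hexp hCinf.
have : DN (n + 1) (fun z => graph X (fun x (_ : 'I_1) => f x) z /\ Cinf (fstp z)).
  apply: (Def_DE (a0:=a0)); dauto HN a0.
apply: D_ext => z; rewrite /graph /Xinf; tauto.
Qed.

Lemma cyl_Bi : cyl ii Bi.
Proof.
move=> x y hxy [u hu]; exists u; move: hu; rewrite /Cinf /Fb => -[h1 h2].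
have E : forall w, C (upd ii x w) -> C (upd ii y w).
  move=> w; apply: hcyl => j hj; rewrite /upd; case: eqP => // hne; apply: hxy.
  have : (j : nat) <> ii by move=> E; apply: hne; exact: val_inj.
  lia.
split; first exact: E.
case: h2 => a [b [hab hin]]; exists a, b; split=> // w h1' h2'.
rewrite upd_upd; apply: E; rewrite -(upd_upd ii x u w); exact: hin.
Qed.

Lemma cyl_Bf : cyl ii Bf.
Proof.
move=> x y hxy [u hu]; exists u; move: hu; rewrite /Cfin => -[h1 h2].
have E : forall w, C (upd ii x w) <-> C (upd ii y w).
  move=> w; split; apply: hcyl => j hj; rewrite /upd; case: eqP => // hne; [|symmetry]; apply: hxy;
  (have : (j : nat) <> ii by move=> E; apply: hne; exact: val_inj); lia.
split; first exact/E.
rewrite !Fb_upd in h2 *; move=> [a [b [hab hin]]]; apply: h2; exists a, b; split=> // w h1' h2'.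
apply/E; exact: hin.
Qed.

Lemma SR_uniq x y y' : SR x y -> SR x y' -> y = y'.
Proof.
move=> [h1 [h2 h3]] [h1' [h2' h3']]; apply: (le_antisym Hom); [exact: h3 | exact: h3'].
Qed.

Lemma sc_spec x y : SR x y -> sc x = y.
Proof. move=> h; have e := epsilon_spec (inhabits a0) (SR x) (ex_intro _ y h); exact: (SR_uniq e h). Qed.

Lemma hXt : DN n Xt.
Proof. have h := Hexp hSR; apply: (Def_DE (a0:=a0)); rewrite /Xt; dauto HN a0. Qed.

Lemma hgXt : DN (n + 1) (graph Xt (fun x (_ : 'I_1) => ft x)).
Proof.
have h := Hexp hSR.
have : DN (n + 1) (fun z => exists y, SR (fstp z) y /\ graph X (fun x (_ : 'I_1) => f x) (concat (upd ii (fstp z) y) (fun _ => sndp z ord0))).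
  apply: (Def_DE (a0:=a0)); dauto HN a0.
apply: D_ext => z; split.
  case=> y [hy]; rewrite graph_pt => -[hx E]; split; first by exists y.
  by move=> j; rewrite (ord1_eq j) E /ft (sc_spec hy).
case=> [[y [hy hx]] E]; exists y; split=> //; rewrite graph_pt; split=> //.
by rewrite E /ft (sc_spec hy).
Qed.

Lemma Xt_Bf x : Xt x -> Bf x.
Proof. by case=> y [[h _] _]; exists y. Qed.

Lemma Xinf_Bi x : Xinf x -> Bi x.
Proof. by case=> _ h; exists (x ii); rewrite upd_same. Qed.

Lemma Fb_def x : DM 1 (p1 (Fb x)).
Proof. exact: (p1_fiber HM a0 x (updrel_def a0 ii HM hC)). Qed.

Lemma dim_Bi : dim n Bi = dim n Cinf.
Proof.
have E1 := fib_dim HN Hdim a0 (i:=ii) (e:=1) (Hexp hBi).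
have E2 := fib_dim HN Hdim a0 (i:=ii) (e:=1) (Hexp hCinf).
rewrite E1 ?E2.
- f_equal; apply: dim_ext => p; rewrite /Pi; split; case=> h1 [u hu]; split=> //.
    by case: hu => w; rewrite upd_upd => hw; exists w.
  by exists u, u; rewrite upd_upd.
- move=> x [hx hint]; rewrite -(proj1 (dim1_int Hom HN Hexp Hdim (Fb_def x)) hint).
  apply: dim_ext => t; rewrite /p1 /Cinf Fb_upd; split; [by case | move=> h; split=> //].
- move=> x hx; rewrite -(D1_line Hdim); apply: dim_ext => t; rewrite /p1; split=> // _.
  by case: hx => u hu; exists u; rewrite upd_upd.
Qed.

Lemma dim_Bf cf : dim n Cfin = Some cf -> dim n Bf = Some cf.+1.
Proof.
have E1 := fib_dim HN Hdim a0 (i:=ii) (e:=1) (Hexp hBf).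
have E2 := fib_dim HN Hdim a0 (i:=ii) (e:=0) (Hexp hCfin).
rewrite E1 ?E2.
- have -> : dim n (Pi a0 ii Cfin) = dim n (Pi a0 ii Bf).
    apply: dim_ext => p; rewrite /Pi; split; case=> h1 [u hu]; split=> //.
      by exists u, u; rewrite upd_upd.
    by case: hu => w; rewrite upd_upd => hw; exists w.
  by case: (dim n (Pi a0 ii Bf)) => [d|] //= [<-]; rewrite addn1 addn0.
- move=> x [hx hnint].
  have hle := dim1_noint Hom HN Hexp Hdim (Fb_def x) hnint.
  have [d Ed] := dim_some Hdim (x := fun _ => x ii) (Hexp (Fb_def x)) (ltac:(by rewrite /p1 /Fb upd_same)).
  rewrite Ed in hle; case: d Ed hle => [|d] //= Ed _.
  rewrite -Ed; apply: dim_ext => t; rewrite /p1 /Cfin Fb_upd; split; [by case | move=> h; split=> //].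
- move=> x hx; rewrite -(D1_line Hdim); apply: dim_ext => t; rewrite /p1; split=> // _.
  by case: hx => u hu; exists u; rewrite upd_upd.
Qed.

Section Glue.
Variables F1 Ft : tup M n -> M.
Hypothesis hF1 : DM (n + 1) (graph (fun _ => True) (fun x (_ : 'I_1) => F1 x)).
Hypothesis hFt : DM (n + 1) (graph (fun _ => True) (fun x (_ : 'I_1) => Ft x)).
Hypothesis eF1 : forall b, dim n Bi = Some b -> olt (dim n (Exc Xinf f F1)) b.
Hypothesis eFt : forall b, dim n Bf = Some b -> olt (dim n (Exc Xt ft Ft)) b.

Definition Ix x u := SR (upd ii x u) (x ii).
Definition Nc c x u := Ix x u /\ Ft (upd ii x u) <> c.
Definition Pc x c := ~ int1 lt (Nc c x).
Definition Q2 x c := (Pc x c /\ forall c', Pc x c' -> c' = c) \/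
                     (~ (exists c0, Pc x c0 /\ forall c', Pc x c' -> c' = c0) /\ c = a0).
Definition Rg x c := (Cinf x /\ c = F1 x) \/ (~ Cinf x /\ Q2 x c).
Definition Et := Exc Xt ft Ft.
Definition Rr x u := Ix x u /\ Et (upd ii x u).

Lemma hNc c : DM (n + 1) (fun z => Nc c (fstp z) (sndp z ord0)).
Proof.
have h := hSR.
have : DM (n + 1) (fun z => SR (upd ii (fstp z) (sndp z ord0)) (fstp z ii) /\
   ~ graph (fun _ => True) (fun x (_ : 'I_1) => Ft x) (concat (upd ii (fstp z) (sndp z ord0)) (fun _ => c))).
  apply: (Def_DE (a0:=a0)); dauto HM a0.
apply: D_ext => z; rewrite /Nc /Ix graph_pt; split; case=> h1 h2; split=> //.
  by move=> E; apply: h2; split.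
by move=> [_ E]; apply: h2.
Qed.

Lemma hPc : DM (n + 1) (fun z => Pc (fstp z) (sndp z ord0)).
Proof.
have h := hSR.
have : DM (n + 1) (fun z => ~ exists a b, lt a b /\ forall u, lt a u -> lt u b ->
   SR (upd ii (fstp z) u) (fstp z ii) /\
   ~ graph (fun _ => True) (fun x (_ : 'I_1) => Ft x) (concat (upd ii (fstp z) u) (fun _ => sndp z ord0))).
  apply: (Def_DE (a0:=a0)); dauto HM a0.
apply: D_ext => z; rewrite /Pc /int1 /Nc /Ix.
have E : forall u, (~ graph (fun _ => True) (fun x (_ : 'I_1) => Ft x) (concat (upd ii (fstp z) u) (fun _ => sndp z ord0)))
   <-> Ft (upd ii (fstp z) u) <> sndp z ord0.
  move=> u; rewrite graph_pt; split=> hh E; apply: hh; [by rewrite E | by case: E].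
split=> hh [a [b [hab hin]]]; apply: hh; exists a, b; split=> // u h1 h2; have [h3 h4] := hin u h1 h2;
  split=> //; by apply/E.
Qed.

Lemma hQ2 : DM (n + 1) (fun z => Q2 (fstp z) (sndp z ord0)).
Proof. have h := hPc; apply: (Def_DE (a0:=a0)); rewrite /Q2; dauto HM a0. Qed.

Lemma hRg : DM (n + 1) (fun z => Rg (fstp z) (sndp z ord0)).
Proof.
have h1 := hQ2; have h2 := hCinf.
have : DM (n + 1) (fun z => (Cinf (fstp z) /\ graph (fun _ => True) (fun x (_ : 'I_1) => F1 x) (concat (fstp z) (fun _ => sndp z ord0)))
   \/ (~ Cinf (fstp z) /\ Q2 (fstp z) (sndp z ord0))).
  apply: (Def_DE (a0:=a0)); dauto HM a0.
apply: D_ext => z; rewrite /Rg graph_pt; split.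
  by case=> [[hh [_ E]]|hh]; [left | right].
by case=> [[hh E]|hh]; [left | right].
Qed.

Lemma Q2_uniq x c c' : Q2 x c -> Q2 x c' -> c = c'.
Proof.
case=> [[h1 h2]|[h1 ->]]; case=> [[h1' h2']|[h1' ->]] //.
- exact: h2' _ h1.
- exfalso; apply: h1'; by exists c.
- exfalso; apply: h1; by exists c'.
Qed.

Lemma Q2_ex x : exists c, Q2 x c.
Proof.
case: (classic (exists c0, Pc x c0 /\ forall c', Pc x c' -> c' = c0)) => [[c0 h]|h].
  by exists c0; left.
by exists a0; right.
Qed.

Lemma Rg_uniq x c c' : Rg x c -> Rg x c' -> c = c'.
Proof.
case=> [[h1 ->]|[h1 h2]]; case=> [[h1' ->]|[h1' h2']] //; try by exfalso.
exact: Q2_uniq h2 h2'.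
Qed.

Lemma Rg_ex x : exists c, Rg x c.
Proof.
case: (classic (Cinf x)) => h; first by exists (F1 x); left.
have [c hc] := Q2_ex x; by exists c; right.
Qed.

Lemma hRr : DN (n + 1) (fun z => Rr (fstp z) (sndp z ord0)).
Proof.
have h1 := Hexp hSR.
have h2 : DN n Et := Exc_def HN a0 hgXt (Hexp hFt).
apply: (Def_DE (a0:=a0)); rewrite /Rr /Ix; dauto HN a0.
Qed.

Lemma Rr_disj x x' u u' : Xfin x -> Xfin x' -> Rr x u -> Rr x' u' -> upd ii x u = upd ii x' u' -> x = x'.
Proof.
move=> _ _ [h1 _] [h1' _] E; rewrite /Ix E in h1.
have E' := SR_uniq h1 h1'.
by rewrite -(upd_same ii x) -(upd_upd ii x u) E E' upd_upd upd_same.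
Qed.

Definition Tb x := Xfin x /\ dim 1 (p1 (Rr x)) = Some 1.

Lemma hTb : DN n Tb.
Proof. exact: (fam_def HN Hdim a0 hXfin hRr Rr_disj (Some 1)). Qed.

Lemma Ix_Xt x u : X x -> Ix x u -> Xt (upd ii x u).
Proof. move=> hx h; exists (x ii); split=> //; by rewrite upd_upd upd_same. Qed.

Lemma Ix_ft x u : Ix x u -> ft (upd ii x u) = f x.
Proof. move=> h; by rewrite /ft (sc_spec h) upd_upd upd_same. Qed.

Lemma interval_Ix x : Cfin x -> exists z, lt z (x ii) /\ forall u, lt z u -> lt u (x ii) -> Ix x u.
Proof.
move=> [hx hn].
have [p [pts hpts]] := fin_of_noint (Fb_def x) hn.
have [z [hz hzp]] := below_pts pts (x ii).
exists z; split=> // u h1 h2; rewrite /Ix /SR upd_at upd_upd upd_same; split; first by split.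
split; first by left.
move=> y' hy' hle.
rewrite upd_upd in hy'.
have [j Ej] := hpts y' (proj1 hy').
case: (lt_total Hom y' (x ii)) => [hl|[->|hl]]; [|by right|by left].
exfalso; have := hzp j; rewrite -Ej => /(_ hl) hz'.
have := lt_le_tr h1 hle => hzy.
case: hz' => [h|E]; [exact: (lt_asym Hom h hzy) | rewrite E in hzy; exact: (lt_irr Hom hzy)].
Qed.

Lemma Nc_def c x : DM 1 (p1 (Nc c x)).
Proof. exact: (p1_fiber HM a0 x (hNc c)). Qed.

Lemma good x F : (forall x, Rg x (F x)) -> Xfin x -> ~ Tb x -> F x = f x.
Proof.
move=> hF [hx hcf] hnT.
have hnCinf : ~ Cinf x by case=> _ h; case: hcf => _; apply.
have hQ : Q2 x (F x) by case: (hF x) => [[]|[]].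
apply: Q2_uniq hQ _; left.
have hP : Pc x (f x).
  move=> hint.
  have E1 := proj1 (dim1_int Hom HN Hexp Hdim (Nc_def (f x) x)) hint.
  have hR1 : DN 1 (p1 (Rr x)) := p1_fiber HN a0 x hRr.
  have := dim_mono Hdim (Hexp (Nc_def (f x) x)) hR1.
  rewrite E1 => /(_ _) H.
  have : ole (Some 1) (dim 1 (p1 (Rr x))).
    apply: H => t [h1 h2]; split=> //; split; first exact: Ix_Xt.
    rewrite (Ix_ft h1) => E; apply: h2; by rewrite E.
  have := dim1_le HN Hdim hR1.
  case E: (dim 1 (p1 (Rr x))) => [[|[|d]]|] //= _ _.
  by apply: hnT.
split=> // c' hc'.
apply: NNPP => hne.
have [z [hz hzI]] := interval_Ix hcf.
have hU : DM 1 (fun t => p1 (Nc c' x) t \/ p1 (Nc (f x) x) t) := st_union HM (Nc_def c' x) (Nc_def (f x) x).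
have hint : int1 lt (fun u => Nc c' x u \/ Nc (f x) x u).
  exists z, (x ii); split=> // u h1 h2.
  case: (classic (Ft (upd ii x u) = c')) => E; [right | left]; split; try exact: hzI.
    by rewrite E.
  by [].
have := proj1 (dim1_int Hom HN Hexp Hdim hU) hint.
rewrite (D2 Hdim (Hexp (Nc_def c' x)) (Hexp (Nc_def (f x) x))).
have := dim1_noint Hom HN Hexp Hdim (Nc_def c' x) hc'.
have := dim1_noint Hom HN Hexp Hdim (Nc_def (f x) x) hP.
case: (dim 1 (p1 (Nc (f x) x))) => [[|d]|] //=; case: (dim 1 (p1 (Nc c' x))) => [[|d']|] //=.
Qed.

Lemma glue : exists F, DM (n + 1) (graph (fun _ => True) (fun x (_ : 'I_1) => F x)) /\
    forall c, dim n C = Some c -> olt (dim n (Exc X f F)) c.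
Proof.
have [F hF] := fun_of_rel a0 (R := Rg) Rg_ex.
have hgF : DM (n + 1) (graph (fun _ => True) (fun x (_ : 'I_1) => F x)) := rel_graph hF Rg_uniq hRg.
exists F; split=> // c hc.
have hEx := Exc_def HN a0 hg (Hexp hgF).
have hE1 := Exc_def HN a0 hgXinf (Hexp hF1).
have hT := hTb.
have hU : DN n (fun x => Exc Xinf f F1 x \/ Tb x) := st_union HN hE1 hT.
have hinc : forall x, Exc X f F x -> Exc Xinf f F1 x \/ Tb x.
  move=> x [hx hne]; case: (classic (Cinf x)) => hci.
    left; split; first by split.
    by case: (hF x) => [[_ E]|[hn _]]; [rewrite -E | exfalso].
  right; apply: NNPP => hnT.
  have hxf : Xfin x by split=> //; split; [exact: hXC | move=> hi; apply: hci; split=> //; exact: hXC].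
  by apply: hne; rewrite (good hF hxf hnT).
apply: (olt_ole (dim_mono Hdim hEx hU hinc)).
rewrite (D2 Hdim hE1 hT); apply: olt_omax.
  case E: (dim n Cinf) => [b|].
    have hb := eF1 (etrans dim_Bi E).
    have : ole (Some b) (Some c) by rewrite -E -hc; apply: (dim_mono Hdim (Hexp hCinf) (Hexp hC)) => x [].
    move=> /= hbc; exact: olt_le hb hbc.
  have : ole (dim n (Exc Xinf f F1)) (dim n Cinf) by apply: (dim_mono Hdim hE1 (Hexp hCinf)) => x [[]].
  by rewrite E; case: (dim n (Exc Xinf f F1)).
case E: (dim n Cfin) => [cf|].
  have hb := eFt (dim_Bf E).
  have hTp : DN n (fun w => exists x, Tb x /\ exists u, Rr x u /\ forall j, w j = upd ii x u j).
    have h1 := hRr; apply: (Def_DE (a0:=a0)); dauto HN a0.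
  have hd := fam_dim HN Hdim a0 (i:=ii) hT hRr (fun x x' u u' hx hx' => Rr_disj (proj1 hx) (proj1 hx')) (e:=1) (fun x hx => proj2 hx).
  have hEt : DN n Et := Exc_def HN a0 hgXt (Hexp hFt).
  have : ole (oadd (dim n Tb) (Some 1)) (dim n Et).
    rewrite -hd; apply: (dim_mono Hdim _ hEt).
      apply: D_ext hTp => w; split; case=> x [hx [u [hu hw]]]; exists x; split=> //; exists u; split=> //.
        exact: tup_ext.
      by move=> j; rewrite hw.
    by move=> w [x [_ [u [[_ he] ->]]]].
  move=> hle; have := olt_ole hle hb.
  have : ole (Some cf) (Some c) by rewrite -E -hc; apply: (dim_mono Hdim (Hexp hCfin) (Hexp hC)) => x [].
  case: (dim n Tb) => [t|] //= ; lia.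
have : ole (dim n Tb) (dim n Cfin) by apply: (dim_mono Hdim hT (Hexp hCfin)) => x [[]].
by rewrite E; case: (dim n Tb).
Qed.

End Glue.

Lemma step : Qi DM DN dim n ii -> exists F, DM (n + 1) (graph (fun _ => True) (fun x (_ : 'I_1) => F x)) /\
    forall c, dim n C = Some c -> olt (dim n (Exc X f F)) c.
Proof.
move=> IH.
have [F1 [hF1 eF1]] := IH Bi Xinf f hBi cyl_Bi hXinf Xinf_Bi hgXinf.
have [Ft [hFt eFt]] := IH Bf Xt ft hBf cyl_Bf hXt Xt_Bf hgXt.
exact: (glue hF1 hFt eF1 eFt).
Qed.

End S.

End Step.



Lemma Qall (M : Type) (lt : M -> M -> Prop)
  (DM DN : forall n, pset M n -> Prop) (dim : forall n, pset M n -> option nat) :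
  o_minimal lt DM -> is_structure DN -> expands DM DN -> dim_compatible lt DM DN dim -> M ->
  forall n i, i <= n -> Qi DM DN dim n i.
Proof.
move=> Hom HN Hexp Hdim a0 n; elim=> [|i IH] hi.
  exact: (Q0 Hom HN Hexp Hdim a0).
move=> C X f hC hcyl hX hXC hg.
exact: (@step M lt DM DN dim Hom HN Hexp Hdim a0 n (Ordinal hi) C X f hC hcyl hX hXC hg (IH (ltnW hi))).
Qed.

Theorem lemma2p5 (M : Type) (lt : M -> M -> Prop)
  (DM DN : forall n, pset M n -> Prop) (dim : forall n, pset M n -> option nat) :
  o_minimal lt DM ->
  is_structure DN ->
  expands DM DN ->
  open_definable_L lt DM DN ->
  dim_compatible lt DM DN dim ->
  forall (n k : nat) (X : pset M n) (f : tup M n -> M),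
    strongly_large lt DN dim X ->
    dim n X = Some k ->
    DN (n + 1) (graph X (fun x (_ : 'I_1) => f x)) ->
    exists F : tup M n -> M,
      DM (n + 1) (graph (fun _ => True) (fun x (_ : 'I_1) => F x)) /\
      exists S : pset M n,
        DN n S /\ olt (dim n S) k /\ forall x, X x -> ~ S x -> f x = F x.
Proof.
move=> Hom HN Hexp Hopen Hdim n k X f [hX hcl] hk hg.
have [a0] := dlo_inhab (om_dlo Hom).
have DltN : DN 2 (fun x => lt (x ord0) (x ord_max)) := Hexp _ _ (om_lt Hom).
have hclN : DN n (Defs.closure lt X).
  apply: (Def_DE (a0:=a0)); rewrite /Defs.closure /box; dauto HN a0.
have hop : is_open lt (fun x => ~ Defs.closure lt X x).
  move=> x hx.
  have [a [b [hab hn]]] : exists a b, box lt a b x /\ ~ exists y, box lt a b y /\ X y.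
    apply: NNPP => hn; apply: hx => a b hab; apply: NNPP => hn'; apply: hn; by exists a, b.
  exists a, b; split=> // y hy hcy; apply: hn; exact: hcy a b hy.
have hclM : DM n (Defs.closure lt X).
  have := st_compl (om_struct Hom) (Hopen _ _ (st_compl HN hclN) hop).
  apply: D_ext => x; split; [exact: NNPP | tauto].
have hcyl : cyl n (Defs.closure lt X).
  move=> x y hxy hx; have -> : y = x by apply: tup_ext => j; symmetry; apply: hxy; exact: ltn_ord.
  exact: hx.
have hXC : forall x, X x -> Defs.closure lt X x by move=> x hx a b hb; exists x.
have [F [hF hE]] := Qall Hom HN Hexp Hdim a0 (leqnn n) hclM hcyl hX hXC hg.
exists F; split=> //; exists (Exc X f F); split; first exact: (Exc_def HN a0 hg (Hexp _ _ hF)).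
split; first by apply: hE; rewrite -hcl.
move=> x hx hn; apply: NNPP => hne; exact: hn (conj hx hne).
Qed.
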